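(* Let $\{X_\alpha:\alpha\in\mathscr A\}$ be a family of Banach spaces and $\kappa$ an infinite cardinal. Consider the condition (P): for every $\varepsilon>0$ there exists $\beta\in\mathscr A$ such that for every set $A\subset S_{X_\beta}$ with $|A|<\kappa$ there is $y\in S_{X_\beta}$ satisfying $\|x+y\|\le 1+\varepsilon$ for all $x\in A$. If (P) holds, then $\ell_\infty(\mathscr A,X_\alpha)$ is $\mathrm{ASQ}_{<\kappa}$. Moreover, if $|\mathscr A|<\mathrm{cf}(\kappa)$ and $\lambda^{|\mathscr A|}<\kappa$ for every cardinal $\lambda<\kappa$, then conversely, $\ell_\infty(\mathscr A,X_\alpha)$ being $\mathrm{ASQ}_{<\kappa}$ implies (P).
   Context: $\ell_\infty(\mathscr A,X_\alpha)$ is the Banach space of functions $x$ on $\mathscr A$ with $x(\alpha)\in X_\alpha$ and $\|x\|_\infty=\sup_\alpha\|x(\alpha)\|<\infty$. A Banach space $Z$ is $\mathrm{ASQ}_{<\kappa}$ if for every set $A\subset S_Z$ with $|A|<\kappa$ and every $\varepsilon>0$ there exists $y\in S_Z$ with $\|x\pm y\|\le 1+\varepsilon$ for all $x\in A$. $\mathrm{cf}$ denotes cofinality. *)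

(* Defs.v *)
From HB Require Import structures.
From mathcomp Require Import all_boot all_order all_algebra.
From mathcomp Require Import all_classical all_reals all_analysis.
Set Implicit Arguments. Unset Strict Implicit. Unset Printing Implicit Defensive.
Import Order.TTheory GRing.Theory Num.Theory.
Import numFieldNormedType.Exports.
Local Open Scope classical_set_scope.
Local Open Scope ring_scope.

Definition card_le (T U : Type) : Prop := exists f : T -> U, injective f.
Definition card_lt (T U : Type) : Prop := card_le T U /\ ~ card_le U T.

(* The infinite cardinal kappa is represented as the cardinality of a type K. *)
Definition infinite_type (K : Type) : Prop := ~ finite_set [set: K].

(* Rel is a strict well-order on K whose order type is the initial ordinal
   of |K| (every proper initial segment has cardinality < |K|). *)
Definition initial_wellorder (K : Type) (Rel : K -> K -> Prop) : Prop :=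
  [/\ (forall k, ~ Rel k k),
      (forall i j k, Rel i j -> Rel j k -> Rel i k),
      (forall i j, [\/ Rel i j, i = j | Rel j i]),
      well_founded Rel
    & (forall k, card_lt {j : K | Rel j k} K)].

(* |I| < cf(|K|): no subset of K of cardinality <= |I| is cofinal, i.e. the
   image of every map I -> K is bounded (strictly) in the initial ordinal K. *)
Definition card_lt_cf (I K : Type) : Prop :=
  exists Rel : K -> K -> Prop, initial_wellorder Rel /\
    forall f : I -> K, exists k, forall i, Rel (f i) k.

Definition pow_below (I K : Type) : Prop :=
  forall L : Type, card_lt L K -> card_lt (I -> L) K.

Definition ASQ_lt {R : realType} {V : Type} (Zs : set V) (add : V -> V -> V)
    (opp : V -> V) (nrm : V -> R) (K : Type) : Prop :=
  forall (A : set V), A `<=` [set z | Zs z /\ nrm z = 1] ->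
    card_lt {x : V | A x} K ->
    forall eps : R, 0 < eps ->
    exists y : V, [/\ Zs y, nrm y = 1 &
      forall x, A x -> nrm (add x y) <= 1 + eps /\ nrm (add x (opp y)) <= 1 + eps].

Section Linf.
Variables (R : realType) (I : Type) (X : I -> completeNormedModType R).

Definition linf_set : set (forall i, X i) :=
  [set x | exists M : R, forall i, `|x i| <= M].

Definition linf_norm (x : forall i, X i) : R := sup (range (fun i => `|x i|)).

Definition linf_add (x y : forall i, X i) : forall i, X i := fun i => x i + y i.
Definition linf_opp (x : forall i, X i) : forall i, X i := fun i => - x i.

Definition linf_ASQ_lt (K : Type) : Prop :=
  ASQ_lt linf_set linf_add linf_opp linf_norm K.
End Linf.

Definition condP {R : realType} {I : Type} (X : I -> completeNormedModType R)
    (K : Type) : Prop :=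
  forall eps : R, 0 < eps -> exists b : I,
    forall A : set (X b), A `<=` [set x | `|x| = 1] ->
      card_lt {x : X b | A x} K ->
      exists y : X b, `|y| = 1 /\ forall x, A x -> `|x + y| <= 1 + eps.

(* Main.v *)
Require Import Defs.
From HB Require Import structures.
From mathcomp Require Import all_boot all_order all_algebra.
From mathcomp Require Import all_classical all_reals all_analysis.
From mathcomp Require Import lra.
Set Implicit Arguments. Unset Strict Implicit. Unset Printing Implicit Defensive.
Import Order.TTheory GRing.Theory Num.Theory.
Import numFieldNormedType.Exports.
Local Open Scope classical_set_scope.
Local Open Scope ring_scope.
Local Open Scope card_scope.
Local Notation cle := Defs.card_le.
Local Notation clt := Defs.card_lt.
Lemma cle_set (T U : Type) : cle T U <-> [set: T] #<= [set: U].
Proof.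
split.
- case=> f finj.
  elim/Ppointed: U f finj => U f finj.
    have -> : [set: T] = set0.
      by apply/seteqP; split => // t; move: (f t) => u; have : [set: U] u by []; rewrite emptyE.
    exact: card_ge0.
  by apply/pcard_injP; exists f => x y _ _; apply: finj.
- elim/Ppointed: U => U.
    rewrite emptyE.
    move=> /eqP T0.
    have nT : T -> False by move=> t; have : [set: T] t by []; rewrite T0.
    by exists (fun t => False_rect _ (nT t)) => t; case: (nT t).
  by move/pcard_injP => [f finj]; exists f => x y; apply: finj; rewrite inE.
Qed.

Lemma nat_inj_set (T : Type) (S : set T) : infinite_set S ->
  exists e : nat -> T, injective e /\ forall n, S (e n).
Proof.
elim/Ppointed: T S => T S.
  move=> iS; exfalso; apply: iS.
  rewrite (_ : S = set0); first exact: finite_set0.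
  by apply/seteqP; split => // t; have : [set: T] t by []; rewrite emptyE.
move=> /infiniteP /pcard_leP /injfunPex [f ff fi].
exists f; split; last by move=> n; apply: ff.
by move=> x y; apply: fi; rewrite inE.
Qed.
From mathcomp Require Import zify.
Lemma double_inj (T : Type) : infinite_set [set: T] ->
  exists h : bool * T -> T, injective h.
Proof.
move=> iT.
pose P : set (set (bool * T * T)) := fun G => [/\
  (forall p s s', G (p,s) -> G (p,s') -> s = s'),
  (forall p p' s, G (p,s) -> G (p',s) -> p = p'),
  (forall b t s, G ((b,t),s) -> forall b', exists s', G ((b',t),s')) &
  (forall p s, G (p,s) -> exists s', G ((true,s),s'))].
have chainP : forall F, F `<=` P -> total_on F subset -> P (\bigcup_(X in F) X).
  move=> F FP Ftot; split.
  - move=> p s s' [G1 F1 G1s] [G2 F2 G2s].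
    case: (Ftot _ _ F1 F2) => [h12|h21].
    + by case: (FP _ F2) => f _ _ _; apply: f (h12 _ G1s) G2s.
    + by case: (FP _ F1) => f _ _ _; apply: f G1s (h21 _ G2s).
  - move=> p p' s [G1 F1 G1s] [G2 F2 G2s].
    case: (Ftot _ _ F1 F2) => [h12|h21].
    + by case: (FP _ F2) => _ f _ _; apply: f (h12 _ G1s) G2s.
    + by case: (FP _ F1) => _ f _ _; apply: f G1s (h21 _ G2s).
  - move=> b t s [G1 F1 G1s] b'; case: (FP _ F1) => _ _ tt _.
    by have [s' Hs'] := tt _ _ _ G1s b'; exists s'; exists G1.
  - move=> p s [G1 F1 G1s]; case: (FP _ F1) => _ _ _ rr.
    by have [s' Hs'] := rr _ _ G1s; exists s'; exists G1.
have [G [PG Gmax]] := Zorn_bigcup chainP.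
case: PG => Gf Gi Gt Gr.
pose D := [set t | exists s, G ((true,t),s)].
have DG : forall b t, D t -> exists s, G((b,t),s).
  by move=> b t [s Hs]; apply: Gt Hs b.
have GD : forall b t s, G((b,t),s) -> D t.
  by move=> b t s Hs; apply: Gt Hs true.
have fin : finite_set (~` D).
  apply: contrapT => /nat_inj_set [e [einj eD]].
  pose G' := G `|` [set q | exists n (b : bool), q = ((b, e n), e (2 * n + b)%N)].
  apply: (Gmax G').
    split; first by move=> q Gq; left.
    move=> /(_ ((true, e 0%N), e 1%N)) H; apply: (eD 0%N); exists (e 1%N); apply: H.
    by right; exists 0%N, true.
  have e2 : forall n n' (b b' : bool), e (2 * n + b)%N = e (2 * n' + b')%N -> n = n' /\ b = b'.
    move=> n n' b b' /einj; case: b; case: b' => /=; lia.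
  split.
  - move=> p s s' [Gs|[n [b E]]] [Gs'|[n' [b' E']]].
    + exact: Gf Gs Gs'.
    + case: E' => Ep _; subst p; exfalso; apply: (eD n'); exact: GD Gs.
    + case: E => Ep _; subst p; exfalso; apply: (eD n); exact: GD Gs'.
    + case: E => Ep Es; case: E' => Ep' Es'; subst.
      by case: Ep' => -> /einj ->.
  - move=> p p' s [Gs|[n [b E]]] [Gs'|[n' [b' E']]].
    + exact: Gi Gs Gs'.
    + case: E' => Ep Es; subst; exfalso.
      by have [s1 Hs1] := Gr _ _ Gs; apply: (eD (2 * n' + b')%N); exists s1.
    + case: E => Ep Es; subst; exfalso.
      by have [s1 Hs1] := Gr _ _ Gs'; apply: (eD (2 * n + b)%N); exists s1.
    + case: E => Ep Es; case: E' => Ep' Es'; subst.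
      by have [-> ->] := e2 _ _ _ _ Es'.
  - move=> b t s [Gs|[n [b0 E]]] b'.
    + by have [s' Hs'] := Gt _ _ _ Gs b'; exists s'; left.
    + case: E => _ -> _.
      by exists (e (2 * n + b')%N); right; exists n, b'.
  - move=> p s [Gs|[n [b0 E]]].
    + by have [s' Hs'] := Gr _ _ Gs; exists s'; left.
    + case: E => _ ->.
      by exists (e (2 * (2 * n + b0) + true)%N); right; exists (2 * n + b0)%N, true.
have Dinf : infinite_set D.
  move=> fD; apply: iT; rewrite -(setUv D) finite_setU; split => //.
have [e [einj eD]] := nat_inj_set Dinf.
have [c cinj] : exists c : T -> nat, {in ~` D &, injective c}.
  by apply/pcard_injP; apply: finite_set_countable.
pose g p := if pselect (exists s, G(p,s)) is left H then proj1_sig (cid H) else p.2.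
have gG : forall b t, D t -> G((b,t), g (b,t)).
  move=> b t Dt; rewrite /g; case: pselect => [H|H].
    exact: (proj2_sig (cid H)).
  by case: H; apply: DG.
pose phi t := if pselect (D t) is left _ then
      (if pselect (exists n, t = e n) is left H then e (2 * proj1_sig (cid H) + 1)%N else t)
    else e (2 * c t)%N.
have phiD : forall t, D (phi t).
  move=> t; rewrite /phi; case: pselect => Dt; last exact: eD.
  by case: pselect => // H; exact: eD.
have phiinj : injective phi.
  move=> t t'; rewrite /phi.
  case: (pselect (D t)) => Dt; case: (pselect (D t')) => Dt'.
  - case: (pselect (exists n, t = e n)) => Ht; case: (pselect (exists n, t' = e n)) => Ht'.
    + move/einj => E; rewrite (proj2_sig (cid Ht)) (proj2_sig (cid Ht')).
      by congr e; lia.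
    + by move=> E; case: Ht'; eexists; symmetry; exact: E.
    + by move=> E; case: Ht; eexists; exact: E.
    + by [].
  - case: (pselect (exists n, t = e n)) => Ht.
    + by move/einj; lia.
    + by move=> E; case: Ht; eexists; exact: E.
  - case: (pselect (exists n, t' = e n)) => Ht'.
    + by move/einj; lia.
    + by move=> E; case: Ht'; eexists; symmetry; exact: E.
  - move/einj => E; apply: cinj; rewrite ?inE //; lia.
exists (fun p => g (p.1, phi p.2)) => [[b t] [b' t']] /= E.
have H1 := gG b (phi t) (phiD t); have H2 := gG b' (phi t') (phiD t').
rewrite /= E in H1.
by case: (Gi _ _ _ H1 H2) => -> /phiinj ->.
Qed.
Lemma cle_clt (A B K : Type) : cle A B -> clt B K -> clt A K.
Proof.
move=> [f finj] [[g ginj] nKB]; split.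
  by exists (g \o f) => x y /ginj /finj.
by move=> [k kinj]; apply: nKB; exists (f \o k) => x y /finj /kinj.
Qed.

Lemma dbl (A K : Type) : infinite_type K -> clt A K -> clt (bool * A) K.
Proof.
move=> iK [[f finj] nKA].
case: (pselect (finite_set [set: A])) => fA.
- have fB : finite_set [set: bool * A].
    rewrite -setXTT; apply: finite_setX => //; exact: finite_finset.
  split.
  + apply/cle_set; have /finite_set_leP [n Hn] := fB.
    apply: (card_le_trans Hn); apply: (card_le_trans _ (iffLR (infiniteP _) iK)).
    exact: card_le_trans (subset_card_le (subsetT _)) (card_lexx _).
  + by move/cle_set => H; apply: iK; exact: card_le_finite H fB.
- have [h hinj] := double_inj fA; split.
  + by exists (f \o h) => x y /finj /hinj.
  + by move=> [k kinj]; apply: nKA; exists (h \o k) => x y /hinj /kinj.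
Qed.
Lemma seg_emb (K A : Type) (Rel : K -> K -> Prop) :
  (forall i j, [\/ Rel i j, i = j | Rel j i]) -> well_founded Rel ->
  ~ cle K A -> exists k, cle A {j : K | Rel j k}.
Proof.
move=> tot wf nKA.
apply: contrapT => Hno.
have Hno' : forall k, ~ cle A {j | Rel j k} by move=> k H; apply: Hno; exists k.
have ex : forall k (r : forall j, Rel j k -> A), exists a, forall j (H : Rel j k), r j H <> a.
  move=> k r; apply: contrapT => Hn.
  have Hall : forall a, exists p : {j | Rel j k}, r (sval p) (proj2_sig p) = a.
    move=> a; apply: contrapT => Hna; apply: Hn; exists a => j H E; apply: Hna.
    by exists (exist _ j H).
  apply: (Hno' k).
  exists (fun a => proj1_sig (cid (Hall a))) => a a' E.
  by rewrite -(proj2_sig (cid (Hall a))) -(proj2_sig (cid (Hall a'))) E.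
pose F k (r : forall j, Rel j k -> A) : A := proj1_sig (cid (ex k r)).
pose h := Fix wf (fun _ => A) F.
have hE : forall k, h k = F k (fun j _ => h j).
  apply: Fix_eq => k f g fg.
  have -> : f = g; last by [].
  apply: functional_extensionality_dep => j.
  by apply: functional_extensionality_dep => p; apply: fg.
have hne : forall j k, Rel j k -> h j <> h k.
  by move=> j k jk; rewrite (hE k) /F; exact: (proj2_sig (cid (ex k _))) j jk.
apply: nKA; exists h => j k E.
case: (tot j k) => [jk| // | kj]; exfalso.
  exact: hne jk E.
exact: hne kj (esym E).
Qed.
Section LinfFacts.
Variables (R : realType) (I : Type) (X : I -> completeNormedModType R).

Lemma linf_le (x : forall i, X i) : linf_set x -> forall i, `|x i| <= linf_norm x.
Proof.
move=> [M HM] i; rewrite /linf_norm; apply: ub_le_sup; last by exists i.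
by exists M => _ [j _ <-]; exact: HM.
Qed.

Lemma linf_ub (x : forall i, X i) (b : I) (M : R) :
  (forall i, `|x i| <= M) -> linf_norm x <= M.
Proof.
move=> HM; rewrite /linf_norm; apply: ge_sup; first by exists `|x b|, b.
by move=> _ [j _ <-]; exact: HM.
Qed.

Lemma linf_adh (x : forall i, X i) : linf_set x -> linf_norm x = 1 ->
  forall d : R, 0 < d -> exists i, 1 - d < `|x i|.
Proof.
move=> [M HM] x1 d d0.
case: (pselect (exists i : I, True)) => [[i0 _]|nI]; last first.
  exfalso; move: x1; rewrite /linf_norm.
  have -> : range (fun i => `|x i|) = set0.
    by apply/seteqP; split => // y [i _ _]; case: nI; exists i.
  by rewrite sup0 => /eqP; rewrite eq_sym oner_eq0.
have hs : has_sup (range (fun i => `|x i|)).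
  split; first by exists `|x i0|, i0.
  by exists M => y [j _ <-]; exact: HM.
have [_ [i _ <-] Hi] := sup_adherent d0 hs.
by exists i; rewrite -x1.
Qed.

Definition upd (b : I) (v : X b) : forall i, X i := fun i =>
  match pselect (b = i) with left e => eq_rect b X v i e | right _ => 0 end.

Lemma upd_eq (b : I) (v : X b) : upd v b = v.
Proof. by rewrite /upd; case: pselect => // e; rewrite (Prop_irrelevance e erefl). Qed.

Lemma upd_neq (b i : I) (v : X b) : b <> i -> upd v i = 0.
Proof. by rewrite /upd; case: pselect. Qed.

Lemma upd_set (b : I) (v : X b) : linf_set (upd v).
Proof.
exists `|v| => i; case: (pselect (b = i)) => [e|ne].
  by subst i; rewrite upd_eq.
by rewrite upd_neq // normr0.
Qed.

Lemma upd_norm (b : I) (v : X b) : `|v| = 1 -> linf_norm (upd v) = 1.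
Proof.
move=> v1; apply/eqP; rewrite eq_le; apply/andP; split.
  apply: (linf_ub b) => i; case: (pselect (b = i)) => [e|ne].
    by subst i; rewrite upd_eq v1.
  by rewrite upd_neq // normr0.
by rewrite -{1}v1 -{1}(upd_eq v); apply: linf_le; apply: upd_set.
Qed.

End LinfFacts.
Lemma key_ineq (R : realType) (V : normedModType R) (w y0 : V) (eps t : R) :
  0 < eps -> `|w| = 1 -> `|y0| = 1 -> `|w + y0| <= 1 + eps -> 0 <= t <= 1 ->
  `|t *: w + y0| <= 1 + eps.
Proof.
move=> e0 w1 y1 wy /andP[t0 t1].
have -> : t *: w + y0 = t *: (w + y0) + (1 - t) *: y0.
  by rewrite scalerDr scalerBl scale1r -addrA; congr (_ + _); rewrite addrC subrK.
apply: (le_trans (ler_normD _ _)); rewrite !normrZ y1 mulr1 (ger0_norm t0) ger0_norm ?subr_ge0 //.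
have : t * `|w + y0| <= t * (1 + eps) by apply: ler_wpM2l.
nra.
Qed.

Lemma part1 (R : realType) (I : Type) (X : I -> completeNormedModType R) (K : Type) :
  infinite_type K -> condP X K -> linf_ASQ_lt X K.
Proof.
move=> iK HP A Asub Acard eps eps0.
have [b Hb] := HP eps eps0.
pose u (x : forall i, X i) : X b := (`|x b|)^-1 *: x b.
pose B : set (X b) := [set v | exists x, [/\ A x, x b != 0 & (v = u x \/ v = - u x)]].
have uN : forall x, x b != 0 -> `|u x| = 1.
  by move=> x nz; rewrite normrZ normfV normr_id mulVf ?normr_eq0.
have Bsub : B `<=` [set x | `|x| = 1].
  by move=> v [x [_ nz [->|->]]] /=; rewrite ?normrN; exact: uN.
have Bcard : clt {v | B v} K.
  apply: (cle_clt _ (dbl iK Acard)).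
  pose xo (p : {v | B v}) := proj1_sig (cid (proj2_sig p)).
  have xoP : forall p, [/\ A (xo p), xo p b != 0 & (sval p = u (xo p) \/ sval p = - u (xo p))].
    by move=> p; exact: (proj2_sig (cid (proj2_sig p))).
  exists (fun p => (`[< sval p = u (xo p) >], exist A (xo p) (let: And3 h _ _ := xoP p in h))).
  move=> p p' [Eb Ex].
  have Exo : xo p = xo p' by [].
  have Ev : sval p = sval p'.
    case: (xoP p) => _ _ [Hp|Hp]; case: (xoP p') => _ _ [Hp'|Hp'].
    - by rewrite Hp Hp' Exo.
    - rewrite (asboolT Hp) in Eb; move/esym/asboolP: Eb => Hp2.
      by rewrite Hp Hp2 Exo.
    - rewrite (asboolT Hp') in Eb; move/asboolP: Eb => Hp2.
      by rewrite Hp2 Hp' Exo.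
    - by rewrite Hp Hp' Exo.
  case: p p' Ev {Eb Ex Exo} => v Bv [v' Bv'] /= Ev; subst v'.
  by rewrite (Prop_irrelevance Bv Bv').
have [y0 [y0N Hy0]] := Hb B Bsub Bcard.
have Hpm : forall x, A x -> `|x b + y0| <= 1 + eps /\ `|x b - y0| <= 1 + eps.
  move=> x Ax; have [xs xN] := Asub _ Ax.
  have xb1 : `|x b| <= 1 by rewrite -xN; exact: linf_le.
  case: (eqVneq (x b) 0) => [->|nz].
    by rewrite add0r sub0r normrN y0N; split; lra.
  have xbE : x b = `|x b| *: u x.
    by rewrite /u scalerA mulfV ?normr_eq0 // scale1r.
  have tr : 0 <= `|x b| <= 1 by rewrite normr_ge0 xb1.
  split.
    rewrite xbE; apply: key_ineq => //; first exact: uN.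
    by apply: Hy0; exists x; split => //; left.
  have -> : x b - y0 = - (`|x b| *: (- u x) + y0).
    by rewrite {1}xbE scalerN opprD opprK.
  rewrite normrN; apply: key_ineq => //; first by rewrite normrN; exact: uN.
  by apply: Hy0; exists x; split => //; right.
exists (upd y0); split.
- exact: upd_set.
- exact: upd_norm.
- move=> x Ax; have [[M HM] xN] := Asub _ Ax.
  have xi1 : forall i, `|x i| <= 1 by move=> i; rewrite -xN; apply: linf_le; exists M.
  split; apply: (linf_ub b) => i; rewrite /linf_add /linf_opp;
    case: (pselect (b = i)) => [e|ne].
  + by subst i; rewrite upd_eq; case: (Hpm _ Ax).
  + by rewrite upd_neq // addr0; apply: (le_trans (xi1 i)); lra.
  + by subst i; rewrite upd_eq; case: (Hpm _ Ax).
  + by rewrite upd_neq // oppr0 addr0; apply: (le_trans (xi1 i)); lra.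
Qed.
Lemma part2 (R : realType) (I : Type) (X : I -> completeNormedModType R) (K : Type) :
  infinite_type K -> card_lt_cf I K -> pow_below I K -> linf_ASQ_lt X K -> condP X K.
Proof.
move=> iK [Rel [[irr trans tot wf seg] bnd]] pw asq eps eps0.
apply: contrapT => nP.
have nP' : forall b, exists Ab : set (X b), [/\ Ab `<=` [set x | `|x| = 1],
    clt {x | Ab x} K & forall y, `|y| = 1 -> exists x, Ab x /\ 1 + eps < `|x + y|].
  move=> b; apply: contrapT => H; apply: nP; exists b => Ab Asub Acard.
  apply: contrapT => Hy; apply: H; exists Ab; split => // y y1.
  apply: contrapT => Hx; apply: Hy; exists y; split => // x Ax.
  by rewrite leNgt; apply/negP => lt; apply: Hx; exists x; split.
pose Af b := proj1_sig (cid (nP' b)).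
have HAf : forall b, [/\ Af b `<=` [set x | `|x| = 1],
    clt {x | Af b x} K & forall y, `|y| = 1 -> exists x, Af b x /\ 1 + eps < `|x + y|].
  by move=> b; exact: (proj2_sig (cid (nP' b))).
have nk : forall b, exists k, cle {x | Af b x} {j | Rel j k}.
  move=> b; apply: seg_emb => //; by case: (HAf b) => _ [].
pose kf b := proj1_sig (cid (nk b)).
pose emb b : {x | Af b x} -> {j | Rel j (kf b)} := proj1_sig (cid (proj2_sig (cid (nk b)))).
have embI : forall b, injective (emb b).
  by move=> b; exact: (proj2_sig (cid (proj2_sig (cid (nk b))))).
have [ks Hks] := bnd kf.
pose L := {j | Rel j ks}.
have Lc : clt (I -> L) K by apply: pw; exact: seg.
pose Aset := [set x : forall i, X i | [/\ linf_set x, linf_norm x = 1 &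
   forall i, Af i (x i) \/ x i = 0]].
have Acard : clt {x | Aset x} K.
  apply: (cle_clt _ Lc).
  pose F (x : forall i, X i) (i : I) : L :=
    match pselect (Af i (x i)) with
    | left H => exist _ (sval (emb i (exist _ (x i) H)))
                  (trans _ _ _ (proj2_sig (emb i (exist _ (x i) H))) (Hks i))
    | right _ => exist _ (kf i) (Hks i) end.
  exists (fun p => F (sval p)).
  move=> [x Ax] [x' Ax'] /= E.
  have Exx : x = x'.
    apply: functional_extensionality_dep => i.
    have Ei := congr1 (fun f => sval (f i)) E; move: Ei; rewrite /F /=.
    case: (pselect (Af i (x i))) => H; case: (pselect (Af i (x' i))) => H' /= Ei.
    - have : emb i (exist _ (x i) H) = emb i (exist _ (x' i) H').
        move: Ei; case: (emb i _) => a pa; case: (emb i _) => a' pa' /= Ea.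
        by subst a'; rewrite (Prop_irrelevance pa pa').
      by move/embI => [].
    - by exfalso; move: (proj2_sig (emb i (exist _ (x i) H))); rewrite Ei; apply: irr.
    - by exfalso; move: (proj2_sig (emb i (exist _ (x' i) H'))); rewrite -Ei; apply: irr.
    - case: Ax => _ _ /(_ i) [//|->]; case: Ax' => _ _ /(_ i) [//|->] //.
  subst x'; by rewrite (Prop_irrelevance Ax Ax').
have Asub : Aset `<=` [set z | linf_set z /\ linf_norm z = 1] by move=> x [].
have e2 : 0 < eps / 2 by lra.
have [y [ys yN Hy]] := asq Aset Asub Acard (eps / 2) e2.
have [d [d0 d1 d2]] : exists d : R, [/\ 0 < d, d < 1 & d <= eps / 2].
  by case: (lerP (eps / 2) (1 / 2)) => h; [exists (eps / 2) | exists (1 / 2)]; split; lra.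
have [i Hi] := linf_adh ys yN d0.
have r1 : `|y i| <= 1 by rewrite -yN; exact: linf_le.
have r0 : 0 < `|y i| by lra.
pose u := (`|y i|)^-1 *: y i.
have uN : `|u| = 1 by rewrite normrZ normfV normr_id mulVf // gt_eqF.
have uy : `|u - y i| = 1 - `|y i|.
  rewrite /u -{3}(scale1r (y i)) -scalerBl normrZ ger0_norm; last by rewrite subr_ge0 invf_ge1.
  by rewrite mulrBl mulVf ?mul1r // gt_eqF.
case: (HAf i) => Asub_i _ Hgood.
have [xi [Axi Hxi]] := Hgood u uN.
have xi1 : `|xi| = 1 := Asub_i _ Axi.
have Az : Aset (upd xi).
  split; [exact: upd_set | exact: upd_norm | move=> j].
  case: (pselect (i = j)) => [e|ne]; first by subst j; left; rewrite upd_eq.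
  by right; exact: upd_neq.
have [Hzy _] := Hy _ Az.
have zys : linf_set (linf_add (upd xi) y).
  case: (upd_set xi) => M1 H1; case: ys => M2 H2; exists (M1 + M2) => j.
  by rewrite /linf_add; apply: le_trans (ler_normD _ _) _; apply: lerD.
have := linf_le zys i; rewrite /linf_add upd_eq => Hle.
have tri : `|xi + u| <= `|xi + y i| + `|u - y i|.
  have -> : xi + u = (xi + y i) + (u - y i) by rewrite [u - y i]addrC addrA addrK.
  exact: ler_normD.
lra.
Qed.

Theorem theorem4p1 (R : realType) (I : Type) (X : I -> completeNormedModType R)
  (K : Type) (hK : infinite_type K) :
  (condP X K -> linf_ASQ_lt X K) /\
  (card_lt_cf I K -> pow_below I K -> linf_ASQ_lt X K -> condP X K).
Proof.
split; first exact: part1.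
exact: part2.
Qed.
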